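(* Let $g(S) = w(S) := \sum_{v \in S} w(v)$ for nonnegative weights $w : V \to \mathbb{R}_{\ge 0}$. Let $d > 0$ and let $S_d^*$ be a maximum-weight independent set of the intersection graph $G_d(V)$ among those of size at most $k$. If $T$ is an output of $\mathrm{GreedyIndependentSet}(V,g,d',k)$ with $0 \le d' \le d/2$, then $w(T) \ge w(S_d^* )$.
   Context: Let $V$ be a finite set of points in a metric space with metric $\mathrm{dist}$. For $u \in V$ and $S \subseteq V$ let $\mathrm{dist}(u,S) = \min_{v \in S}\mathrm{dist}(u,v)$, with $\mathrm{dist}(u,\emptyset) = \infty$. For $d \ge 0$, the intersection graph $G_d(V)$ has vertex set $V$ and edge set $\{\{u,v\} : u \ne v,\ \mathrm{dist}(u,v) < d\}$; thus $S$ is an independent set of $G_d(V)$ iff $\mathrm{dist}(u,v) \ge d$ for all distinct $u,v \in S$. Let $k \ge 1$ be an integer. $\mathrm{GreedyIndependentSet}(V,g,d,k)$: initialize $S \gets \emptyset$; for $i = 1,\dots,k$: let $C = \{v \in V\setminus S : \mathrm{dist}(v,S) \ge d\}$; if $C = \emptyset$ return $S$; otherwise pick $t \in \arg\max_{v \in C} \big(g(S\cup\{v\}) - g(S)\big)$ (ties broken arbitrarily) and set $S \gets S \cup\{t\}$. After the loop, return $S$. *)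

(* Defs.v *)
From HB Require Import structures.
From mathcomp Require Import all_boot all_order all_algebra.
Set Implicit Arguments. Unset Strict Implicit. Unset Printing Implicit Defensive.
Import Order.TTheory GRing.Theory Num.Theory.
Local Open Scope ring_scope.

Definition is_metric (R : realFieldType) (P : Type) (dist : P -> P -> R) : Prop :=
  [/\ forall x y, 0 <= dist x y,
      forall x y, dist x y = 0 <-> x = y,
      forall x y, dist x y = dist y x
    & forall x y z, dist x z <= dist x y + dist y z].

Definition independent (R : realFieldType) (P : finType) (dist : P -> P -> R)
    (V : {set P}) (d : R) (S : {set P}) : Prop :=
  S \subset V /\ (forall u v, u \in S -> v \in S -> u != v -> d <= dist u v).

(* Candidate set C = { v in V \ S : dist(v,S) >= d } (dist(v,emptyset) = oo). *)
Definition candidates (R : realFieldType) (P : finType) (dist : P -> P -> R)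
    (V : {set P}) (d : R) (S : {set P}) : {set P} :=
  [set v in V :\: S | [forall s in S, d <= dist v s]].

(* greedy_run dist V g d n S out : running the remaining n iterations of
   GreedyIndependentSet from the current set S may return out
   (ties in the argmax are broken arbitrarily, hence a relation). *)
Inductive greedy_run (R : realFieldType) (P : finType) (dist : P -> P -> R)
    (V : {set P}) (g : {set P} -> R) (d : R) : nat -> {set P} -> {set P} -> Prop :=
  | greedy_done S : greedy_run dist V g d 0 S S
  | greedy_empty n S : candidates dist V d S = set0 -> greedy_run dist V g d n.+1 S S
  | greedy_pick n S t out :
      t \in candidates dist V d S ->
      (forall v, v \in candidates dist V d S ->
          g (v |: S) - g S <= g (t |: S) - g S) ->
      greedy_run dist V g d n (t |: S) out ->
      greedy_run dist V g d n.+1 S out.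

Definition greedy_output (R : realFieldType) (P : finType) (dist : P -> P -> R)
    (V : {set P}) (g : {set P} -> R) (d : R) (k : nat) (T : {set P}) : Prop :=
  greedy_run dist V g d k set0 T.

Definition wsum (R : realFieldType) (P : finType) (w : P -> R) (S : {set P}) : R :=
  \sum_(v in S) w v.

(* Main.v *)
Require Import Defs.
From HB Require Import structures.
From mathcomp Require Import all_boot all_order all_algebra.
From mathcomp Require Import ring lra.
Import Order.TTheory GRing.Theory Num.Theory.
Local Open Scope ring_scope.
Set Implicit Arguments. Unset Strict Implicit.

Section Aux.
Variables (R : realFieldType) (P : finType) (dist : P -> P -> R)
    (V : {set P}) (w : P -> R) (d d' : R) (Sstar : {set P}).

Definition blk (S : {set P}) : {set P} :=
  [set s in Sstar | (s \in S) || [exists t in S, dist s t < d']].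

Lemma blk_mono (S S' : {set P}) : S \subset S' -> blk S \subset blk S'.
Proof.
move=> sub; apply/subsetP => s; rewrite !inE => /andP[-> /orP[H|/existsP[t /andP[Ht Hd]]]] /=.
  by rewrite (subsetP sub _ H).
apply/orP; right; apply/existsP; exists t; rewrite Hd andbT; exact: (subsetP sub).
Qed.

Lemma unblk_cand (S : {set P}) s : Sstar \subset V -> s \in Sstar -> s \notin blk S ->
  s \in candidates dist V d' S.
Proof.
move=> sV sS; rewrite !inE sS /= negb_or => /andP[nS /existsPn nE].
rewrite nS (subsetP sV _ sS) /=; apply/forallP => t; apply/implyP => tS.
by have := nE t; rewrite tS /= -leNgt.
Qed.

Lemma wsum_U1 t (S : {set P}) : t \notin S -> wsum w (t |: S) = w t + wsum w S.
Proof. by move=> tS; rewrite /wsum big_setU1. Qed.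

Lemma run_sub n S out : greedy_run dist V (wsum w) d' n S out -> S \subset out.
Proof.
elim=> //= {n S out} n S t out _ _ _ IH.
by apply: subset_trans IH; apply/subsetP => x xS; rewrite inE xS orbT.
Qed.

Lemma run_end n S out : greedy_run dist V (wsum w) d' n S out ->
  candidates dist V d' out = set0 \/ #|out| = (#|S| + n)%N.
Proof.
elim=> //= {n S out}; first by move=> S; right; rewrite addn0.
  by move=> n S ->; left.
move=> n S t out tC _ _ [->|IH]; first by left.
right; rewrite IH cardsU1.
move: tC; rewrite inE => /andP[]; rewrite inE => /andP[-> _] _.
by rewrite addnS add1n addSn.
Qed.

Hypothesis Hm : is_metric dist.
Hypothesis Hd : 0 < d.
Hypothesis Hd'0 : 0 <= d'.
Hypothesis Hd' : d' <= d / 2.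
Hypothesis Hind : independent dist V d Sstar.

Lemma blk_step (S : {set P}) t : t \in candidates dist V d' S ->
  blk (t |: S) = blk S \/
  exists s, [/\ s \in Sstar, s \notin blk S & blk (t |: S) = s |: blk S].
Proof.
move=> tC.
have sub : blk S \subset blk (t |: S).
  by apply: blk_mono; apply/subsetP => x xS; rewrite inE xS orbT.
have key : forall s, s \in blk (t |: S) -> s \notin blk S ->
    s \in Sstar /\ (s = t \/ dist s t < d').
  move=> s; rewrite [s \in blk (t |: S)]inE => /andP[sS /orP[]].
    rewrite in_setU1 => /orP[/eqP <- _|sS'] ; first by split=> //; left.
    by rewrite inE sS sS'.
  move=> /existsP[u /andP[]]; rewrite in_setU1 => /orP[/eqP -> dst|uS dst].
    by split=> //; right.
  rewrite inE sS /= negb_or => /andP[_ /existsPn /(_ u)]; by rewrite uS dst.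
have [D0|[s sD]] := set_0Vmem (blk (t |: S) :\: blk S).
  left; apply/eqP; rewrite eqEsubset sub andbT.
  by rewrite -setD_eq0 D0.
right; exists s; move: sD; rewrite inE => /andP[snB sB].
have [sS st] := key s sB snB.
split=> //; apply/eqP; rewrite eqEsubset; apply/andP; split; last first.
  by apply/subsetP => x; rewrite in_setU1 => /orP[/eqP ->|/(subsetP sub)].
apply/subsetP => u uB; rewrite in_setU1; case uBS: (u \in blk S); first by rewrite orbT.
have [uS ut] := key u uB (negbT uBS).
apply/orP; left; apply/negPn/negP => neq.
case: Hm => d0 d00 dsym dtri.
case: Hind => _ /(_ u s uS sS neq) ind.
have dtt : dist t t = 0 by apply/d00.
have hu : dist u t <= d' by case: ut => [->|/ltW //]; rewrite dtt.
have hs : dist s t <= d' by case: st => [->|/ltW //]; rewrite dtt.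
have tri := dtri u t s; rewrite (dsym t s) in tri.
case: ut => [ut|ut]; case: st => [st|st].
- by move: neq; rewrite ut st eqxx.
- move: tri ind; rewrite ut dtt; move=> h1 h2; have := Hd; have := Hd'; lra.
- move: tri ind; rewrite st dtt; have := Hd; have := Hd'; lra.
- have := Hd; have := Hd'; lra.
Qed.

Hypothesis Hw : forall v, v \in V -> 0 <= w v.

Lemma run_inv n S out : greedy_run dist V (wsum w) d' n S out ->
  forall x, (x = 0 \/ exists2 s0, s0 \in Sstar & s0 \notin blk out /\ x = w s0) ->
  wsum w (blk out) - wsum w (blk S)
    + ((#|out|%:R - #|S|%:R) - (#|blk out|%:R - #|blk S|%:R)) * x
  <= wsum w out - wsum w S.
Proof.
have sV : Sstar \subset V by case: Hind.
elim=> {n S out}.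
- by move=> S x _; rewrite !subrr mul0r addr0.
- by move=> n S _ x _; rewrite !subrr mul0r addr0.
move=> n S t out tC tmax run IH x Hx.
have tS : t \notin S by move: tC; rewrite !inE => /andP[/andP[]].
have tV : t \in V by move: tC; rewrite !inE => /andP[/andP[]].
have gt : forall s, s \in Sstar -> s \notin blk S -> w s <= w t.
  move=> s sS sB; have sC := unblk_cand sV sS sB.
  have sS' : s \notin S by move: sC; rewrite !inE => /andP[/andP[]].
  by have := tmax s sC; rewrite !wsum_U1 //; lra.
have hx : x <= w t.
  case: Hx => [->|[s0 s0S [s0B ->]]]; first exact: Hw.
  apply: gt s0S _; apply: contra s0B; apply/subsetP.
  apply: subset_trans (blk_mono (run_sub run)).
  by apply: blk_mono; apply/subsetP => y yS; rewrite inE yS orbT.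
have IH' := IH x Hx.
move: IH'; rewrite wsum_U1 // cardsU1 tS /= natrD.
case: (blk_step tC) => [->|[s [sS sB ->]]].
  lra.
rewrite wsum_U1 // cardsU1 sB /= natrD.
have := gt s sS sB; lra.
Qed.

End Aux.

Theorem lemmaC1 (R : realFieldType) (P : finType) (dist : P -> P -> R)
    (V : {set P}) (w : P -> R) (k : nat) (d d' : R) (Sstar T : {set P}) :
  is_metric dist ->
  (forall v, v \in V -> 0 <= w v) ->
  (1 <= k)%N ->
  0 < d ->
  independent dist V d Sstar -> (#|Sstar| <= k)%N ->
  (forall S, independent dist V d S -> (#|S| <= k)%N -> wsum w S <= wsum w Sstar) ->
  0 <= d' -> d' <= d / 2 ->
  greedy_output dist V (wsum w) d' k T ->
  wsum w Sstar <= wsum w T.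
Proof.
move=> Hm Hw _ Hd Hind Hk _ Hd'0 Hd' run.
have sV : Sstar \subset V by case: Hind.
set B := blk dist d' Sstar T.
have BS : B \subset Sstar by apply/subsetP => x; rewrite inE => /andP[].
have split : wsum w Sstar = wsum w B + wsum w (Sstar :\: B).
  by rewrite /wsum (big_setID B) /= (setIidPr BS).
have inv := run_inv Hm Hd Hd'0 Hd' Hind Hw run.
have B0 : blk dist d' Sstar set0 = set0.
  by apply/setP => x; rewrite !inE; case: (x \in Sstar) => //=; apply/existsP=> [[y]]; rewrite inE.
rewrite B0 /wsum !big_set0 !cards0 !subr0 -/B in inv.
have [U0|[s1 s1U]] := set_0Vmem (Sstar :\: B).
  have := inv 0 (or_introl erefl); rewrite mulr0 addr0 split U0 /wsum big_set0 addr0.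
  by [].
have [Hc|Hc] := run_end run.
  exfalso; have : s1 \in candidates dist V d' T.
    by move: s1U; rewrite inE => /andP[s1B s1S]; exact: (unblk_cand sV s1S s1B).
  by rewrite Hc inE.
rewrite cards0 add0n in Hc.
case: (arg_maxP w (P := mem (Sstar :\: B)) s1U) => s0 s0U s0max.
have [s0S s0B] : s0 \in Sstar /\ s0 \notin B by apply/setDP.
have := inv (w s0) (or_intror (ex_intro2 _ _ s0 s0S (conj s0B erefl))).
have w0 : 0 <= w s0 by apply: Hw; apply: (subsetP sV).
have bnd : wsum w (Sstar :\: B) <= #|Sstar :\: B|%:R * w s0.
  rewrite /wsum -sum1_card natr_sum mulr_suml.
  by apply: ler_sum => i iU; rewrite mul1r; apply: s0max.
have cnt : (#|Sstar :\: B| + #|B| <= k)%N.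
  have := cardsID B Sstar; rewrite (setIidPr BS) => e; rewrite addnC e //.
have cntR : #|Sstar :\: B|%:R + #|B|%:R <= k%:R :> R by rewrite -natrD ler_nat.
rewrite Hc split => H.
have : (#|Sstar :\: B|%:R : R) * w s0 <= (k%:R - #|B|%:R) * w s0.
  by apply: ler_wpM2r => //; lra.
move=> h; move: bnd; rewrite /wsum; lra.
Qed.
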